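(* Let $S\subseteq\mathbb{N}^{\mathbb{N}}$. Then $S$ is guessable if and only if $S$ is $\mathbf{\Delta}^0_2$.
   Context: A function $G:\mathbb{N}^{<\mathbb{N}}\to\{0,1\}$ ($\mathbb{N}^{<\mathbb{N}}$ = finite sequences of naturals) is a guesser for $S\subseteq\mathbb{N}^{\mathbb{N}}$ if for every $f:\mathbb{N}\to\mathbb{N}$ there is $m>0$ such that for all $n>m$, $G(f(0),\ldots,f(n))$ equals $1$ if $f\in S$ and $0$ if $f\notin S$; $S$ is guessable if it has a guesser. $\mathbb{N}^{\mathbb{N}}$ carries the (Baire space) topology whose basic open sets are $\{f\in\mathbb{N}^{\mathbb{N}}: f \text{ extends } f_0\}$ for $f_0\in\mathbb{N}^{<\mathbb{N}}$. A set is $\mathbf{\Delta}^0_2$ if it is both $G_\delta$ (a countable intersection of open sets) and $F_\sigma$ (a countable union of closed sets). *)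

(* Defs.v *)
From Stdlib Require Import List Arith.
Import ListNotations.

Definition extends (f : nat -> nat) (s : list nat) : Prop :=
  s = map f (seq 0 (length s)).

Definition initseg (f : nat -> nat) (n : nat) : list nat := map f (seq 0 (S n)).

Definition guesser (G : list nat -> bool) (S : (nat -> nat) -> Prop) : Prop :=
  forall f : nat -> nat, exists m : nat, 0 < m /\
    forall n : nat, m < n ->
      (S f -> G (initseg f n) = true) /\ (~ S f -> G (initseg f n) = false).

Definition guessable (S : (nat -> nat) -> Prop) : Prop :=
  exists G : list nat -> bool, guesser G S.

Definition baire_open (U : (nat -> nat) -> Prop) : Prop :=
  exists B : list nat -> Prop,
    forall f, U f <-> exists s, B s /\ extends f s.

Definition baire_closed (C : (nat -> nat) -> Prop) : Prop :=
  baire_open (fun f => ~ C f).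

Definition G_delta (S : (nat -> nat) -> Prop) : Prop :=
  exists U : nat -> (nat -> nat) -> Prop,
    (forall k, baire_open (U k)) /\ (forall f, S f <-> forall k, U k f).

Definition F_sigma (S : (nat -> nat) -> Prop) : Prop :=
  exists C : nat -> (nat -> nat) -> Prop,
    (forall k, baire_closed (C k)) /\ (forall f, S f <-> exists k, C k f).

Definition Delta02 (S : (nat -> nat) -> Prop) : Prop := G_delta S /\ F_sigma S.

(* Main.v *)
Require Import Defs.
From Stdlib Require Import List Arith Lia Classical ClassicalEpsilon.
Import ListNotations.

Lemma initseg_len f n : length (initseg f n) = S n.
Proof. unfold initseg. rewrite length_map, length_seq. reflexivity. Qed.

Lemma extends_ext g h s : extends g s -> (forall i, i < length s -> g i = h i) -> extends h s.
Proof.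
  unfold extends; intros E H. rewrite E at 1. apply map_ext_in.
  intros a Ha. apply in_seq in Ha. apply H. lia.
Qed.

Lemma nth_initseg f n i : i < S n -> nth i (initseg f n) 0 = f i.
Proof.
  intros. unfold initseg.
  rewrite nth_indep with (d' := f 0) by (rewrite length_map, length_seq; lia).
  rewrite map_nth. rewrite seq_nth by lia. reflexivity.
Qed.

Lemma extends_initseg f n s : length s <= S n -> extends f s ->
  extends (fun i => nth i (initseg f n) 0) s.
Proof. intros Hl He. apply (extends_ext f); auto. intros. rewrite nth_initseg; auto; lia. Qed.

Lemma initseg_extends f n s : length s <= S n ->
  extends (fun i => nth i (initseg f n) 0) s -> extends f s.
Proof. intros Hl He. eapply extends_ext; [exact He|]. intros. symmetry; rewrite nth_initseg; auto; lia. Qed.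

Definition refuted (E : nat -> (nat -> nat) -> Prop) (j : nat) (sg : list nat) : Prop :=
  exists s, length s <= length sg /\ extends (fun i => nth i sg 0) s /\
    forall g, extends g s -> ~ E j g.

Fixpoint search E sg k j : bool :=
  match k with
  | 0 => true
  | S k' => if excluded_middle_informative (refuted E j sg) then search E sg k' (S j)
            else Nat.even j
  end.

Lemma search_spec E sg k : forall j j0, j <= j0 -> j0 < j + k ->
  (forall j', j <= j' < j0 -> refuted E j' sg) -> ~ refuted E j0 sg ->
  search E sg k j = Nat.even j0.
Proof.
  induction k; intros j j0 H1 H2 H3 H4; [lia|]. simpl.
  destruct (excluded_middle_informative (refuted E j sg)) as [R|R].
  - assert (j <> j0) by (intro; subst; contradiction).
    apply IHk; auto; try lia. intros; apply H3; lia.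
  - assert (j = j0). { destruct (Nat.eq_dec j j0); auto. exfalso; apply R, H3; lia. }
    subst; reflexivity.
Qed.

Lemma bound (R : nat -> nat -> Prop) m :
  (forall j, j < m -> exists L, forall n, L <= n -> R j n) ->
  exists L, forall j, j < m -> forall n, L <= n -> R j n.
Proof.
  induction m; intros H.
  - exists 0; intros; lia.
  - destruct IHm as [L1 HL1]. { intros; apply H; lia. }
    destruct (H m ltac:(lia)) as [L2 HL2].
    exists (max L1 L2). intros j Hj n Hn.
    destruct (Nat.eq_dec j m). subst; apply HL2; lia. apply HL1; lia.
Qed.

Lemma least (P : nat -> Prop) j : P j -> exists j0, P j0 /\ forall j', j' < j0 -> ~ P j'.
Proof.
  induction j as [j IH] using (well_founded_induction lt_wf). intros Pj.
  destruct (classic (exists j', j' < j /\ P j')) as [[j' [H1 H2]]|N].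
  - exact (IH j' H1 H2).
  - exists j; split; auto. intros j' H1 H2; apply N; eauto.
Qed.

Lemma even2 k : Nat.even (2*k) = true /\ Nat.even (S (2*k)) = false.
Proof.
  induction k; simpl; auto.
  replace (k + S (k + 0)) with (S (2*k)) by lia. simpl. tauto.
Qed.

Definition EE (U C : nat -> (nat -> nat) -> Prop) (j : nat) (f : nat -> nat) : Prop :=
  if Nat.even j then C (Nat.div2 j) f else ~ U (Nat.div2 j) f.

Theorem theorem16 (S : (nat -> nat) -> Prop) : guessable S <-> Delta02 S.
Proof.
  split.
  - intros [G HG]. split.
    + exists (fun m f => exists n, m < n /\ G (initseg f n) = true). split.
      * intros m. exists (fun s => exists n, m < n /\ length s = Datatypes.S n /\ G s = true).
        intro f; split.
        -- intros [n [Hn Hg]]. exists (initseg f n); split.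
           exists n. rewrite initseg_len. auto.
           unfold extends; rewrite initseg_len; reflexivity.
        -- intros [s [[n [Hn [Hl Hs]]] Hext]]. exists n; split; auto.
           unfold extends in Hext. rewrite Hl in Hext. unfold initseg. rewrite <- Hext. auto.
      * intro f; split.
        -- intros Hf m. destruct (HG f) as [m0 [_ H]]. exists (Datatypes.S (m+m0)).
           split. lia. apply (H (Datatypes.S (m+m0)) ltac:(lia)). auto.
        -- intros Hf. destruct (classic (S f)) as [|H]; auto.
           destruct (HG f) as [m0 [_ H0]]. destruct (Hf m0) as [n [Hn Hg]].
           rewrite (proj2 (H0 n Hn) H) in Hg; discriminate.
    + exists (fun m f => forall n, m < n -> G (initseg f n) = true). split.
      * intros m. unfold baire_closed.
        exists (fun s => exists n, m < n /\ length s = Datatypes.S n /\ G s = false).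
        intro f; split.
        -- intros Hf.
           destruct (classic (exists n, m < n /\ G (initseg f n) = false)) as [[n [Hn Hg]]|N].
           ++ exists (initseg f n); split.
              exists n. rewrite initseg_len. auto.
              unfold extends; rewrite initseg_len; reflexivity.
           ++ exfalso; apply Hf. intros n Hn. destruct (G (initseg f n)) eqn:E; auto.
              exfalso; eauto.
        -- intros [s [[n [Hn [Hl Hs]]] Hext]] H.
           unfold extends in Hext. rewrite Hl in Hext.
           specialize (H n Hn). unfold initseg in H. rewrite <- Hext in H. congruence.
      * intro f; split.
        -- intros Hf. destruct (HG f) as [m0 [_ H]]. exists m0. intros n Hn.
           apply (H n Hn). auto.
        -- intros [m Hm]. destruct (classic (S f)) as [|H]; auto.
           destruct (HG f) as [m0 [_ H0]].
           specialize (Hm (Datatypes.S (m + m0)) ltac:(lia)).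
           rewrite (proj2 (H0 (Datatypes.S (m + m0)) ltac:(lia)) H) in Hm; discriminate.
  - intros [[U [HU HSU]] [C [HC HSC]]].
    pose (E := EE U C).
    assert (HE : forall j f, ~ E j f -> exists s, extends f s /\ forall g, extends g s -> ~ E j g).
    { intros j f Hf. unfold E, EE in *. destruct (Nat.even j).
      - destruct (HC (Nat.div2 j)) as [B HB]. apply HB in Hf.
        destruct Hf as [s [Bs Es]]. exists s; split; auto.
        intros g Eg. apply (proj2 (HB g)). eauto.
      - destruct (HU (Nat.div2 j)) as [B HB]. apply NNPP in Hf. apply HB in Hf.
        destruct Hf as [s [Bs Es]]. exists s; split; auto.
        intros g Eg H. apply H. apply (proj2 (HB g)). eauto. }
    exists (fun sg => search E sg (length sg) 0). intro f.
    assert (Hcov : exists j, E j f).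
    { destruct (classic (S f)) as [H|H].
      - apply HSC in H. destruct H as [k Hk]. exists (2*k). unfold E, EE.
        rewrite (proj1 (even2 k)), Nat.div2_double. auto.
      - assert (~ forall k, U k f) by (intro; apply H, HSU; auto).
        apply not_all_ex_not in H0. destruct H0 as [k Hk]. exists (Datatypes.S (2*k)).
        unfold E, EE. rewrite (proj2 (even2 k)), Nat.div2_succ_double. auto. }
    destruct Hcov as [j1 Hj1]. destruct (least (fun j => E j f) j1 Hj1) as [j0 [HE0 Hmin]].
    destruct (bound (fun j n => refuted E j (initseg f n)) j0) as [L HL].
    { intros j Hj. destruct (HE j f (Hmin j Hj)) as [s [Hs Hg]].
      exists (length s). intros n Hn. exists s. rewrite initseg_len. split; [lia|].
      split; auto. apply extends_initseg; auto. }
    exists (Datatypes.S (L + j0)). split; [lia|]. intros n Hn.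
    assert (Hsearch : search E (initseg f n) (length (initseg f n)) 0 = Nat.even j0).
    { apply search_spec; try lia.
      - rewrite initseg_len; lia.
      - intros j' Hj'. apply HL; lia.
      - intros [s [Hl [Hs Hg]]]. rewrite initseg_len in Hl.
        apply (Hg f); auto. eapply initseg_extends; eauto. }
    rewrite Hsearch. unfold E, EE in HE0.
    destruct (Nat.even j0) eqn:Ev; split; intros H; auto.
    + exfalso. apply H. apply HSC. eauto.
    + exfalso. apply HE0. apply HSU. auto.
Qed.
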